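(* Let $(\Omega,d)$ be a compact metric space, $J \subset \mathbb{R}$ an open interval and $\pi_\lambda \colon \Omega \to \mathbb{R}$, $\lambda \in J$, continuous maps, smooth in $\lambda$, satisfying transversality and regularity of order $\tau \in [0,1)$ (defined below). Fix $x,y \in \Omega$ with $x \neq y$, write $r = d(x,y)$ and $\Phi_\lambda = \Phi_\lambda(x,y)$, and let $I$ be a compact subinterval of $J$. The set $\{\lambda \in \operatorname{int} I : |\Phi_{\lambda}| < \delta_{I,\tau}r^{\tau}\}$ can be written as a countable union of disjoint maximal open intervals $I_{1},I_{2},\ldots \subset I$, and: (i) $\mathcal{L}^{1}(I_{j}) \leq 2$ for all $j$; furthermore, if $I_{j}$ and $I$ have no common boundary point, then $r^{2\tau} \lesssim_{I,\tau} \mathcal{L}^{1}(I_{j})$. Consequently there are only finitely many intervals $I_{j}$. (ii) There exist points $\lambda_{j} \in \bar{I}_{j}$ such that for all $\lambda \in \bar{I}_{j}$, $|\Phi_{\lambda}| \geq |\Phi_{\lambda_{j}}|$ and $|\Phi_{\lambda}| \geq \delta_{I,\tau}r^{\tau}|\lambda - \lambda_{j}|$. Furthermore, there exists a constant $\varepsilon > 0$, depending only on $I$ and $\tau$ (and the family), such that: (a) if $\lambda \in I_{j}$ and $|\Phi_{\lambda}| \leq \delta_{I,\tau}r^{\tau}/2$, then $(\lambda - \varepsilon r^{2\tau},\lambda + \varepsilon r^{2\tau}) \cap I \subset I_{j}$; and (b) if $|\Phi_{\lambda_{j}}| \geq \delta_{I,\tau}r^{\tau}/2$, then $|\Phi_{\lambda}|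 \geq \delta_{I,\tau}r^{\tau}/2$ for all $\lambda \in (\lambda_{j} - \varepsilon r^{2\tau}, \lambda_{j} + \varepsilon r^{2\tau}) \cap I$.
   Context: $\Phi_{\lambda}(x,y) := (\pi_{\lambda}(x) - \pi_{\lambda}(y))/d(x,y)$ for $x \neq y$. Transversality of order $\tau$: for every compact $I \subset J$ there is $\delta_{I,\tau} > 0$ with $|\Phi_{\lambda}(x,y)| \leq \delta_{I,\tau}d(x,y)^{\tau} \Rightarrow |\partial_{\lambda}\Phi_{\lambda}(x,y)| \geq \delta_{I,\tau}d(x,y)^{\tau}$ for all $\lambda \in I$, $x,y \in \Omega$; $\delta_{I,\tau}$ in the statement is this constant. Regularity of order $\tau$: for every compact $I \subset J$ and integer $l \geq 0$ there is $C_{I,l,\tau}$ with $|\partial_{\lambda}^{l}\Phi_{\lambda}(x,y)| \leq C_{I,l,\tau}d(x,y)^{-l\tau}$ for all $\lambda \in I$, $x,y$. $\mathcal{L}^1$ is Lebesgue measure; $A \lesssim_{I,\tau} B$ means $A \leq CB$ with $C$ depending only on $I,\tau$ (and the constants of the family). *)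

(* Defs.v *)
From Stdlib Require Import Reals Lra List.
From Stdlib Require Rtopology.
From Coquelicot Require Import Coquelicot.
Open Scope R_scope.

Definition is_metric {Omega : Type} (d : Omega -> Omega -> R) : Prop :=
  (forall x y, 0 <= d x y) /\
  (forall x y, d x y = 0 <-> x = y) /\
  (forall x y, d x y = d y x) /\
  (forall x y z, d x z <= d x y + d y z).

Definition metric_open {Omega : Type} (d : Omega -> Omega -> R) (U : Omega -> Prop) : Prop :=
  forall x, U x -> exists eps, 0 < eps /\ forall y, d x y < eps -> U y.

Definition metric_compact {Omega : Type} (d : Omega -> Omega -> R) : Prop :=
  forall (Idx : Type) (U : Idx -> Omega -> Prop),
    (forall i, metric_open d (U i)) ->
    (forall x, exists i, U i x) ->
    exists l : list Idx, forall x, exists i, In i l /\ U i x.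

Definition inJ (ja jb : Rbar) (l : R) : Prop :=
  Rbar_lt ja (Finite l) /\ Rbar_lt (Finite l) jb.

Definition Phi {Omega : Type} (d : Omega -> Omega -> R) (pi : R -> Omega -> R)
  (l : R) (x y : Omega) : R := (pi l x - pi l y) / d x y.

Definition cont_in_x {Omega : Type} (d : Omega -> Omega -> R) (pi : R -> Omega -> R)
  (ja jb : Rbar) : Prop :=
  forall l, inJ ja jb l -> forall x eps, 0 < eps ->
    exists del, 0 < del /\ forall y, d x y < del -> Rabs (pi l x - pi l y) < eps.

Definition smooth_in_lambda {Omega : Type} (pi : R -> Omega -> R) (ja jb : Rbar) : Prop :=
  forall x l, inJ ja jb l -> forall n, ex_derive_n (fun t => pi t x) n l.

Definition cpt_sub (ja jb : Rbar) (K : R -> Prop) : Prop :=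
  Rtopology.compact K /\ forall l, K l -> inJ ja jb l.

Definition transversal_const {Omega : Type} (d : Omega -> Omega -> R) (pi : R -> Omega -> R)
  (tau : R) (K : R -> Prop) (delta : R) : Prop :=
  0 < delta /\
  forall l x y, K l -> x <> y ->
    Rabs (Phi d pi l x y) <= delta * Rpower (d x y) tau ->
    Rabs (Derive (fun t => Phi d pi t x y) l) >= delta * Rpower (d x y) tau.

Definition transversal {Omega : Type} (d : Omega -> Omega -> R) (pi : R -> Omega -> R)
  (ja jb : Rbar) (tau : R) : Prop :=
  forall K, cpt_sub ja jb K -> exists delta, transversal_const d pi tau K delta.

Definition regular {Omega : Type} (d : Omega -> Omega -> R) (pi : R -> Omega -> R)
  (ja jb : Rbar) (tau : R) : Prop :=
  forall K, cpt_sub ja jb K -> forall n : nat, exists C, forall l x y, K l -> x <> y ->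
    Rabs (Derive_n (fun t => Phi d pi t x y) n l) <= C * Rpower (d x y) (- INR n * tau).

Definition max_open_interval (S : R -> Prop) (a b : R) : Prop :=
  a < b /\ (forall t, a < t < b -> S t) /\
  (forall a' b', (forall t, a' < t < b' -> S t) -> a' <= a -> b <= b' -> a' = a /\ b' = b).

(* Main.v *)
Require Import Defs.
From Stdlib Require Import Reals Lra Lia ZArith List ClassicalEpsilon Classical.
From Stdlib Require Rtopology.
From Stdlib Require Import Ranalysis5.
From Coquelicot Require Import Coquelicot.
Open Scope R_scope.

Definition Hyp (c e : R) (f df : R -> R) (k D : R) : Prop :=
  c < e /\ 0 < k /\ 0 < D /\
  (forall t, c <= t <= e -> continuity_pt f t) /\
  (forall t, c <= t <= e -> is_derive f t (df t)) /\
  (forall t, c <= t <= e -> Rabs (df t) <= D) /\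
  (forall t, c <= t <= e -> Rabs (f t) <= k -> Rabs (df t) >= k).

Definition SS c e (f : R -> R) k := fun l => c < l < e /\ Rabs (f l) < k.

Lemma cont_eps f t : continuity_pt f t -> forall eps, 0 < eps ->
  exists eta, 0 < eta /\ forall u, Rabs (u - t) < eta -> Rabs (f u - f t) < eps.
Proof.
  intros H eps Heps. destruct (H eps Heps) as [al [Hal Hf]].
  exists al; split; auto. intros u Hu.
  destruct (Req_dec u t) as [->|Hne].
  - replace (f t - f t) with 0 by ring. rewrite Rabs_R0; auto.
  - apply (Hf u). split; [split; [exact I| auto] | exact Hu].
Qed.

Lemma L_up c e f df k D : Hyp c e f df k D -> forall u v, c <= u <= e -> c <= v <= e ->
  Rabs (f u - f v) <= D * Rabs (u - v).
Proof.
  intros (Hce & Hk & HD & Hc & Hd & Hu & Ht) u v Hu' Hv'.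
  destruct (MVT_gen f v u df) as [z [Hz E]].
  - intros t Ht'. apply Hd. split.
    + apply Rle_trans with (Rmin v u). apply Rmin_glb; lra. lra.
    + apply Rle_trans with (Rmax v u). lra. apply Rmax_lub; lra.
  - intros t Ht'. apply Hc. split.
    + apply Rle_trans with (Rmin v u). apply Rmin_glb; lra. lra.
    + apply Rle_trans with (Rmax v u). lra. apply Rmax_lub; lra.
  - rewrite E, Rabs_mult. apply Rmult_le_compat_r. apply Rabs_pos.
    apply Hu. split.
    + apply Rle_trans with (Rmin v u). apply Rmin_glb; lra. apply Hz.
    + apply Rle_trans with (Rmax v u). apply Hz. apply Rmax_lub; lra.
Qed.

Lemma L_low c e f df k D : Hyp c e f df k D -> forall u v, c <= u <= e -> c <= v <= e ->
  (forall t, Rmin u v <= t <= Rmax u v -> Rabs (f t) <= k) ->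
  Rabs (f u - f v) >= k * Rabs (u - v).
Proof.
  intros H u v Hu' Hv' Hb. pose proof H as (Hce & Hk & HD & Hc & Hd & Hu & Ht).
  destruct (MVT_gen f v u df) as [z [Hz E]].
  - intros t Ht'. apply Hd. split.
    + apply Rle_trans with (Rmin v u). apply Rmin_glb; lra. lra.
    + apply Rle_trans with (Rmax v u). lra. apply Rmax_lub; lra.
  - intros t Ht'. apply Hc. split.
    + apply Rle_trans with (Rmin v u). apply Rmin_glb; lra. lra.
    + apply Rle_trans with (Rmax v u). lra. apply Rmax_lub; lra.
  - rewrite E, Rabs_mult. apply Rle_ge, Rmult_le_compat_r. apply Rabs_pos.
    apply Rge_le, Ht.
    split.
    + apply Rle_trans with (Rmin v u). apply Rmin_glb; lra. apply Hz.
    + apply Rle_trans with (Rmax v u). apply Hz. apply Rmax_lub; lra.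
    + apply Hb. rewrite Rmin_comm, Rmax_comm. exact Hz.
Qed.
Lemma M0 c e f df k D : Hyp c e f df k D -> forall t, SS c e f k t ->
  exists eta, 0 < eta /\ forall u, Rabs (u - t) < eta -> SS c e f k u.
Proof.
  intros H t [Ht Hf]. pose proof H as (Hce & Hk & HD & Hc & Hd & Hu & Htr).
  destruct (cont_eps f t (Hc t ltac:(lra)) (k - Rabs (f t)) ltac:(lra)) as [eta [He Hu']].
  exists (Rmin eta (Rmin (t - c) (e - t))). split.
  - apply Rmin_glb_lt; auto. apply Rmin_glb_lt; lra.
  - intros u Hut. assert (H1 := Rmin_l eta (Rmin (t - c) (e - t))).
    assert (H2 := Rmin_r eta (Rmin (t - c) (e - t))).
    assert (H3 := Rmin_l (t - c) (e - t)). assert (H4 := Rmin_r (t - c) (e - t)).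
    split.
    + apply Rabs_def2 in Hut. lra.
    + specialize (Hu' u ltac:(lra)).
      pose proof (Rabs_triang_inv (f u) (f t)). lra.
Qed.

Lemma M1 c e f k a b : max_open_interval (SS c e f k) a b -> c <= a /\ b <= e.
Proof.
  intros [Hab [Hin _]]. split.
  - destruct (Rle_dec c a) as [|Hn]; auto. exfalso.
    destruct (Hin ((a + Rmin b c)/2)) as [[H1 H2] _].
    + assert (Rmin b c <= b) by apply Rmin_l. split.
      * assert (a < Rmin b c) by (apply Rmin_glb_lt; lra). lra.
      * assert (a < Rmin b c) by (apply Rmin_glb_lt; lra). lra.
    + assert (Rmin b c <= c) by apply Rmin_r. lra.
  - destruct (Rle_dec b e) as [|Hn]; auto. exfalso.
    destruct (Hin ((b + Rmax a e)/2)) as [[H1 H2] _].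
    + assert (a <= Rmax a e) by apply Rmax_l. split.
      * assert (Rmax a e < b) by (apply Rmax_lub_lt; lra). lra.
      * assert (Rmax a e < b) by (apply Rmax_lub_lt; lra). lra.
    + assert (e <= Rmax a e) by apply Rmax_r. lra.
Qed.

Lemma M2 c e f df k D a b : Hyp c e f df k D -> max_open_interval (SS c e f k) a b ->
  forall t, a <= t <= b -> Rabs (f t) <= k.
Proof.
  intros H Hm t Ht. pose proof H as (Hce & Hk & HD & Hc & Hd & Hu & Htr).
  pose proof (M1 _ _ _ _ _ _ Hm) as [Hca Hbe]. destruct Hm as [Hab [Hin _]].
  destruct (Rle_dec (Rabs (f t)) k) as [|Hn]; auto. exfalso.
  destruct (cont_eps f t (Hc t ltac:(lra)) (Rabs (f t) - k) ltac:(lra)) as [eta [He Hu']].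
  assert (Hm1 := Rmin_l eta (b - a)). assert (Hm2 := Rmin_r eta (b - a)).
  assert (Hm3 : 0 < Rmin eta (b - a)) by (apply Rmin_glb_lt; lra).
  destruct (Rlt_dec t ((a + b)/2)).
  - set (u := t + Rmin eta (b - a) / 4).
    destruct (Hin u) as [_ Hfu]; [unfold u; lra|].
    specialize (Hu' u). assert (Rabs (u - t) < eta) by (unfold u; rewrite Rabs_right; lra).
    specialize (Hu' H0). pose proof (Rabs_triang_inv (f t) (f u)).
    rewrite <- Rabs_Ropp in Hu'. replace (- (f u - f t)) with (f t - f u) in Hu' by ring. lra.
  - apply Rnot_lt_le in n. set (u := t - Rmin eta (b - a) / 4).
    destruct (Hin u) as [_ Hfu]; [unfold u; lra|].
    specialize (Hu' u). assert (Rabs (u - t) < eta) by (unfold u; rewrite Rabs_left; lra).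
    specialize (Hu' H0). pose proof (Rabs_triang_inv (f t) (f u)).
    rewrite <- Rabs_Ropp in Hu'. replace (- (f u - f t)) with (f t - f u) in Hu' by ring. lra.
Qed.

Lemma M3 c e f df k D a b : Hyp c e f df k D -> max_open_interval (SS c e f k) a b ->
  b < e -> Rabs (f b) >= k.
Proof.
  intros H Hm Hbe. pose proof H as (Hce & Hk & HD & Hc & Hd & Hu & Htr).
  pose proof (M1 _ _ _ _ _ _ Hm) as [Hca _]. destruct Hm as [Hab [Hin Hmax]].
  destruct (Rge_dec (Rabs (f b)) k) as [|Hn]; auto. exfalso.
  destruct (M0 c e f df k D H b) as [eta [He Hop]]; [split; lra|].
  assert (Hb1 := Rmin_l (b + eta/2) e). assert (Hb2 := Rmin_r (b + eta/2) e).
  set (b' := Rmin (b + eta/2) e) in *.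
  assert (Hb3 : b < b') by (apply Rmin_glb_lt; lra).
  destruct (Hmax a b') as [_ Hbb]; try lra.
  intros t Ht. destruct (Rlt_dec t b). apply Hin; lra.
  apply Rnot_lt_le in n. apply Hop. rewrite Rabs_right; lra.
Qed.

Lemma M3' c e f df k D a b : Hyp c e f df k D -> max_open_interval (SS c e f k) a b ->
  c < a -> Rabs (f a) >= k.
Proof.
  intros H Hm Hca. pose proof H as (Hce & Hk & HD & Hc & Hd & Hu & Htr).
  pose proof (M1 _ _ _ _ _ _ Hm) as [_ Hbe]. destruct Hm as [Hab [Hin Hmax]].
  destruct (Rge_dec (Rabs (f a)) k) as [|Hn]; auto. exfalso.
  destruct (M0 c e f df k D H a) as [eta [He Hop]]; [split; lra|].
  assert (Hb1 := Rmax_l (a - eta/2) c). assert (Hb2 := Rmax_r (a - eta/2) c).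
  set (a' := Rmax (a - eta/2) c) in *.
  assert (Hb3 : a' < a) by (apply Rmax_lub_lt; lra).
  destruct (Hmax a' b) as [Haa _]; try lra.
  intros t Ht. destruct (Rgt_dec t a). apply Hin; lra.
  apply Rnot_gt_le in n. apply Hop. rewrite Rabs_left1; lra.
Qed.

Lemma M4 (S : R -> Prop) a b a2 b2 t : max_open_interval S a b -> max_open_interval S a2 b2 ->
  a < t < b -> a2 < t < b2 -> a = a2 /\ b = b2.
Proof.
  intros [H1 [I1 X1]] [H2 [I2 X2]] T1 T2.
  assert (HU : forall u, Rmin a a2 < u < Rmax b b2 -> S u).
  { intros u Hu. destruct (Rlt_dec u t).
    - destruct (Rlt_dec a u). apply I1; lra. apply I2.
      assert (Rmin a a2 = a2). { destruct (Rle_dec a a2). rewrite Rmin_left in Hu; lra. apply Rmin_right; lra. }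
      lra.
    - destruct (Rlt_dec u b). apply I1; lra. apply I2.
      assert (Rmax b b2 = b2). { destruct (Rle_dec b b2). apply Rmax_right; lra. rewrite Rmax_left in Hu; lra. }
      lra. }
  destruct (X1 _ _ HU (Rmin_l _ _) (Rmax_l _ _)) as [E1 E2].
  destruct (X2 _ _ HU (Rmin_r _ _) (Rmax_r _ _)) as [E3 E4].
  split; congruence.
Qed.
Lemma closure_rng c e f df k D a b : Hyp c e f df k D -> max_open_interval (SS c e f k) a b ->
  forall u v, a <= u <= b -> a <= v <= b -> forall t, Rmin u v <= t <= Rmax u v -> Rabs (f t) <= k.
Proof.
  intros H Hm u v Hu Hv t Ht. apply (M2 c e f df k D a b H Hm).
  destruct (Rle_dec u v).
  - rewrite Rmin_left, Rmax_right in Ht; lra.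
  - rewrite Rmin_right, Rmax_left in Ht; lra.
Qed.

Lemma M5 c e f df k D a b : Hyp c e f df k D -> max_open_interval (SS c e f k) a b -> b - a <= 2.
Proof.
  intros H Hm. pose proof H as (Hce & Hk & HD & Hc & Hd & Hu & Htr).
  pose proof (M1 _ _ _ _ _ _ Hm) as [Hca Hbe]. pose proof Hm as [Hab _].
  pose proof (L_low c e f df k D H b a ltac:(lra) ltac:(lra)
    (closure_rng c e f df k D a b H Hm b a ltac:(lra) ltac:(lra))) as HL.
  pose proof (M2 c e f df k D a b H Hm a ltac:(lra)).
  pose proof (M2 c e f df k D a b H Hm b ltac:(lra)).
  pose proof (Rabs_triang (f b) (- f a)). rewrite Rabs_Ropp in H2.
  replace (f b + - f a) with (f b - f a) in H2 by ring.
  rewrite (Rabs_right (b - a)) in HL by lra.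
  assert (k * (b - a) <= k * 2) by lra.
  apply Rmult_le_reg_l in H3; lra.
Qed.

Lemma M6 c e f df k D a b : Hyp c e f df k D -> max_open_interval (SS c e f k) a b ->
  c < a -> b < e -> 2 * k <= D * (b - a).
Proof.
  intros H Hm Hca Hbe. pose proof H as (Hce & Hk & HD & Hc & Hd & Hu & Htr).
  pose proof Hm as [Hab _].
  pose proof (L_low c e f df k D H b a ltac:(lra) ltac:(lra)
    (closure_rng c e f df k D a b H Hm b a ltac:(lra) ltac:(lra))) as HL.
  pose proof (L_up c e f df k D H b a ltac:(lra) ltac:(lra)) as HU.
  pose proof (M2 c e f df k D a b H Hm a ltac:(lra)).
  pose proof (M2 c e f df k D a b H Hm b ltac:(lra)).
  pose proof (M3 c e f df k D a b H Hm Hbe).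
  pose proof (M3' c e f df k D a b H Hm Hca).
  rewrite (Rabs_right (b - a)) in HL, HU by lra.
  assert (0 < k * (b - a)) by (apply Rmult_lt_0_compat; lra).
  revert HL HU H0 H1 H2 H3. unfold Rabs.
  destruct (Rcase_abs (f b - f a)); destruct (Rcase_abs (f a)); destruct (Rcase_abs (f b)); intros; lra.
Qed.

Lemma IVT2 c e f : (forall t, c <= t <= e -> continuity_pt f t) ->
  forall u v, c <= u <= e -> c <= v <= e -> f u * f v < 0 ->
  exists z, Rmin u v <= z <= Rmax u v /\ f z = 0.
Proof.
  intros Hc u v Hu Hv Huv.
  assert (Hcm : forall x y, c <= x <= e -> c <= y <= e -> x < y ->
     forall t, x <= t <= y -> continuity_pt f t) by (intros; apply Hc; lra).
  assert (Hcn : forall x y, c <= x <= e -> c <= y <= e -> x < y ->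
     forall t, x <= t <= y -> continuity_pt (fun s => - f s) t).
  { intros. apply (continuity_pt_opp f). apply Hc; lra. }
  destruct (Rtotal_order u v) as [Hl|[Heq|Hg]].
  - rewrite Rmin_left, Rmax_right by lra.
    destruct (Rlt_dec (f u) 0).
    + assert (0 < f v) by nra.
      destruct (IVT_interv f u v (Hcm u v Hu Hv Hl) Hl r H) as [z [Hz Ez]]. eauto.
    + apply Rnot_lt_le in n. assert (f u <> 0) by (intro E; rewrite E in Huv; lra). assert (0 < f u) by lra. assert (f v < 0) by nra.
      destruct (IVT_interv (fun s => - f s) u v (Hcn u v Hu Hv Hl) Hl ltac:(lra) ltac:(lra)) as [z [Hz Ez]].
      cbv beta in Ez. exists z; split; auto; lra.
  - subst. nra.
  - rewrite Rmin_right, Rmax_left by lra.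
    destruct (Rlt_dec (f v) 0).
    + assert (0 < f u) by nra.
      destruct (IVT_interv f v u (Hcm v u Hv Hu Hg) Hg r H) as [z [Hz Ez]]. eauto.
    + apply Rnot_lt_le in n. assert (f v <> 0) by (intro E; rewrite E in Huv; lra). assert (0 < f v) by lra. assert (f u < 0) by nra.
      destruct (IVT_interv (fun s => - f s) v u (Hcn v u Hv Hu Hg) Hg ltac:(lra) ltac:(lra)) as [z [Hz Ez]].
      cbv beta in Ez. exists z; split; auto; lra.
Qed.
Lemma M7 c e f df k D a b epsr : Hyp c e f df k D -> max_open_interval (SS c e f k) a b ->
  D * epsr <= k / 2 ->
  exists lj, a <= lj <= b /\
   (forall l, a <= l <= b -> Rabs (f l) >= Rabs (f lj) /\ Rabs (f l) >= k * Rabs (l - lj)) /\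
   (Rabs (f lj) >= k / 2 -> forall l, Rabs (l - lj) < epsr -> c <= l <= e -> Rabs (f l) >= k / 2).
Proof.
  intros H Hm Heps. pose proof H as (Hce & Hk & HD & Hc & Hd & Hu & Htr).
  pose proof (M1 _ _ _ _ _ _ Hm) as [Hca Hbe]. pose proof Hm as [Hab _].
  destruct (continuity_ab_min (fun t => Rabs (f t)) a b ltac:(lra)) as [lj [Hmin Hlj]].
  { intros t Ht. apply (continuity_pt_comp f Rabs). apply Hc; lra. apply Rcontinuity_abs. }
  exists lj. split; [exact Hlj|]. split.
  - intros l Hl. split. apply Rle_ge, Hmin, Hl.
    pose proof (L_low c e f df k D H l lj ltac:(lra) ltac:(lra)
      (closure_rng c e f df k D a b H Hm l lj Hl Hlj)) as HL.
    destruct (Rle_lt_dec 0 (f l * f lj)) as [Hp|Hn].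
    + assert (Rabs (f l - f lj) <= Rabs (f l)).
      { pose proof (Hmin l Hl). revert H0. unfold Rabs.
        destruct (Rcase_abs (f l - f lj)); destruct (Rcase_abs (f l)); destruct (Rcase_abs (f lj)); intros; nra. }
      lra.
    + exfalso. destruct (IVT2 c e f Hc l lj ltac:(lra) ltac:(lra) Hn) as [z [Hz Ez]].
      assert (a <= z <= b).
      { destruct (Rle_dec l lj).
        - rewrite Rmin_left, Rmax_right in Hz; lra.
        - rewrite Rmin_right, Rmax_left in Hz; lra. }
      pose proof (Hmin z H0). rewrite Ez, Rabs_R0 in H1.
      pose proof (Rabs_pos (f lj)). assert (f lj = 0).
      { destruct (Req_dec (f lj) 0); auto. pose proof (Rabs_pos_lt _ H3). lra. }
      rewrite H3 in Hn. lra.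
  - intros Hlj2 l Hl Hle.
    destruct (Rle_dec l b) as [Hlb|Hlb]; [destruct (Rle_dec a l) as [Hal|Hal]|].
    + apply Rle_ge, Rge_le. apply Rge_trans with (Rabs (f lj)); auto. apply Rle_ge, Hmin; lra.
    + apply Rnot_le_lt in Hal.
      pose proof (M3' c e f df k D a b H Hm ltac:(lra)).
      pose proof (L_up c e f df k D H a l ltac:(lra) ltac:(lra)).
      rewrite (Rabs_right (a - l)) in H1 by lra.
      rewrite Rabs_left in Hl by lra.
      pose proof (Rabs_triang_inv (f a) (f l)).
      assert (D * (a - l) < D * epsr) by (apply Rmult_lt_compat_l; lra). lra.
    + apply Rnot_le_lt in Hlb.
      pose proof (M3 c e f df k D a b H Hm ltac:(lra)).
      pose proof (L_up c e f df k D H b l ltac:(lra) ltac:(lra)).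
      rewrite (Rabs_left (b - l)) in H1 by lra.
      rewrite Rabs_right in Hl by lra.
      pose proof (Rabs_triang_inv (f b) (f l)).
      assert (D * (l - b) < D * epsr) by (apply Rmult_lt_compat_l; lra). lra.
Qed.

Lemma M8 c e f df k D a b epsr : Hyp c e f df k D -> max_open_interval (SS c e f k) a b ->
  D * epsr <= k / 2 ->
  forall l, a < l < b -> Rabs (f l) <= k / 2 ->
  forall m, Rabs (m - l) < epsr -> c < m < e -> a < m < b.
Proof.
  intros H Hm Heps l Hl Hfl m Hml Hmce. pose proof H as (Hce & Hk & HD & Hc & Hd & Hu & Htr).
  pose proof (M1 _ _ _ _ _ _ Hm) as [Hca Hbe]. pose proof Hm as [Hab [Hin Hmax]].
  assert (Hbet : forall t, Rmin l m <= t <= Rmax l m -> SS c e f k t).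
  { intros t Ht.
    assert (Hr : Rmin l m <= t <= Rmax l m /\ c < Rmin l m /\ Rmax l m < e /\ Rabs (t - l) <= Rabs (m - l)).
    { destruct (Rle_dec l m).
      - rewrite Rmin_left, Rmax_right in *; try lra. rewrite !Rabs_right; lra.
      - rewrite Rmin_right, Rmax_left in *; try lra. rewrite !Rabs_left1; lra. }
    split. lra.
    pose proof (L_up c e f df k D H t l ltac:(lra) ltac:(lra)).
    assert (D * Rabs (t - l) < D * epsr) by (apply Rmult_lt_compat_l; lra).
    pose proof (Rabs_triang_inv (f t) (f l)). lra. }
  assert (HSm : SS c e f k m) by (apply Hbet; split; [apply Rmin_r|apply Rmax_r]).
  destruct (M0 c e f df k D H m HSm) as [eta [He Hop]].
  pose proof (Rmin_l a (m - eta/2)). pose proof (Rmin_r a (m - eta/2)).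
  pose proof (Rmax_l b (m + eta/2)). pose proof (Rmax_r b (m + eta/2)).
  destruct (Hmax (Rmin a (m - eta/2)) (Rmax b (m + eta/2))) as [E1 E2]; auto.
  - intros t Ht.
    assert (Rmax b (m+eta/2) = b \/ Rmax b (m+eta/2) = m + eta/2) by (unfold Rmax; destruct Rle_dec; auto).
    assert (Rmin a (m-eta/2) = a \/ Rmin a (m-eta/2) = m - eta/2) by (unfold Rmin; destruct Rle_dec; auto).
    destruct (Rlt_dec a t) as [Hat|Hat]; [destruct (Rlt_dec t b) as [Htb|Htb]|].
    + apply Hin; lra.
    + apply Rnot_lt_le in Htb. destruct (Rle_dec t m).
      * apply Hbet. rewrite Rmin_left, Rmax_right; lra.
      * apply Hop. apply Rnot_le_lt in n. rewrite Rabs_right; lra.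
    + apply Rnot_lt_le in Hat. destruct (Rle_dec m t).
      * apply Hbet. rewrite Rmin_right, Rmax_left; lra.
      * apply Hop. apply Rnot_le_lt in n. rewrite Rabs_left; lra.
  - lra.
Qed.
Lemma E1 c e f df k D : Hyp c e f df k D -> forall l, SS c e f k l ->
  exists a b, max_open_interval (SS c e f k) a b /\ a < l < b.
Proof.
  intros H l Hl. set (S := SS c e f k).
  destruct (M0 c e f df k D H l Hl) as [eta [He Hop]].
  set (Eb := fun t => l <= t /\ forall u, l <= u <= t -> S u).
  set (Ea := fun z => - z <= l /\ forall u, - z <= u <= l -> S u).
  assert (HSce : forall u, S u -> c < u < e) by (intros u [Hu _]; exact Hu).
  destruct (completeness Eb) as [mb [Hub Hlb]].
  { exists e. intros t [Ht Hu]. pose proof (HSce t (Hu t ltac:(lra))). lra. }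
  { exists l. split. lra. intros u Hu. replace u with l by lra. exact Hl. }
  destruct (completeness Ea) as [ma [Hua Hla]].
  { exists (- c). intros t [Ht Hu]. pose proof (HSce (- t) (Hu (- t) ltac:(lra))). lra. }
  { exists (- l). split. lra. intros u Hu. replace u with l by lra. exact Hl. }
  assert (Hb : l + eta/2 <= mb).
  { apply Hub. split. lra. intros u Hu. apply Hop. rewrite Rabs_right; lra. }
  assert (Ha : - (l - eta/2) <= ma).
  { apply Hua. split. lra. intros u Hu. apply Hop. rewrite Rabs_left1; lra. }
  assert (Hin : forall t, - ma < t < mb -> S t).
  { intros t Ht. destruct (Rle_dec l t).
    - destruct (Rle_dec mb t) as [|Hn]. lra.
      destruct (classic (exists t', Eb t' /\ t < t')) as [[t' [[H1 H2] H3]]|Hne].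
      + apply H2; lra.
      + exfalso. apply Hn, Hlb. intros t' Ht'. destruct (Rle_dec t' t); auto.
        exfalso. apply Hne. exists t'. split; auto; lra.
    - destruct (Rle_dec ma (- t)) as [|Hn]. lra.
      destruct (classic (exists t', Ea t' /\ - t < t')) as [[t' [[H1 H2] H3]]|Hne].
      + apply H2; lra.
      + exfalso. apply Hn, Hla. intros t' Ht'. destruct (Rle_dec t' (- t)); auto.
        exfalso. apply Hne. exists t'. split; auto; lra. }
  exists (- ma), mb. split; [|lra].
  split; [lra|]. split; [exact Hin|].
  intros a' b' Hab' Ha' Hb'.
  assert (b' <= mb).
  { destruct (Rle_dec b' mb) as [|Hn]; auto. exfalso. apply Rnot_le_lt in Hn.
    assert (Eb ((mb + b')/2)). { split. lra. intros u Hu. apply Hab'; lra. }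
    apply Hub in H0. lra. }
  assert (- ma <= a').
  { destruct (Rle_dec (- ma) a') as [|Hn]; auto. exfalso. apply Rnot_le_lt in Hn.
    assert (Ea (- ((- ma + a')/2))). { split. lra. intros u Hu. apply Hab'; lra. }
    apply Hua in H1. lra. }
  split; lra.
Qed.
Lemma up_nat x : 0 <= x -> exists n : nat, x < INR n <= x + 1.
Proof.
  intros Hx. destruct (archimed x) as [H1 H2].
  assert (0 < up x)%Z by (apply lt_0_IZR; lra).
  exists (Z.to_nat (up x)). rewrite INR_IZR_INZ, Z2Nat.id by lia. lra.
Qed.

Lemma F c e f df k D : Hyp c e f df k D ->
  exists L : list (R * R), forall a b, max_open_interval (SS c e f k) a b -> In (a, b) L.
Proof.
  intros H. pose proof H as (Hce & Hk & HD & Hc & Hd & Hu & Htr).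
  set (S := SS c e f k).
  set (h := k / D). assert (Hh : 0 < h) by (unfold h; apply Rdiv_lt_0_compat; lra).
  set (fsel := fun t => epsilon (inhabits (0,0)) (fun p : R * R => max_open_interval S (fst p) (snd p) /\ fst p < t < snd p)).
  set (pl := epsilon (inhabits (0,0)) (fun p : R * R => max_open_interval S (fst p) (snd p) /\ fst p = c)).
  set (pr := epsilon (inhabits (0,0)) (fun p : R * R => max_open_interval S (fst p) (snd p) /\ snd p = e)).
  destruct (up_nat ((e - c) / h)) as [N [HN1 HN2]].
  { apply Rdiv_le_0_compat; lra. }
  exists (pl :: pr :: map (fun n => fsel (c + INR n * h)) (seq 0 N)).
  intros a b Hm.
  pose proof (M1 _ _ _ _ _ _ Hm) as [Hca Hbe]. pose proof Hm as [Hab _].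
  destruct (Req_dec a c) as [Eac|Nac]; [|destruct (Req_dec b e) as [Ebe|Nbe]].
  - left. assert (Hp : max_open_interval S (fst pl) (snd pl) /\ fst pl = c).
    { apply (epsilon_spec (inhabits (0,0)) (fun p : R * R => max_open_interval S (fst p) (snd p) /\ fst p = c)).
      exists (a, b). simpl. auto. }
    destruct pl as [p1 p2]. simpl in Hp. destruct Hp as [Hp Hp1]. pose proof Hp as [Hp2 _].
    pose proof (Rmin_l (b - c) (p2 - c)). pose proof (Rmin_r (b - c) (p2 - c)).
    assert (0 < Rmin (b - c) (p2 - c)) by (apply Rmin_glb_lt; lra).
    destruct (M4 S a b p1 p2 (c + Rmin (b - c) (p2 - c) / 2) Hm Hp) as [-> ->]; try lra. auto.
  - right; left. assert (Hp : max_open_interval S (fst pr) (snd pr) /\ snd pr = e).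
    { apply (epsilon_spec (inhabits (0,0)) (fun p : R * R => max_open_interval S (fst p) (snd p) /\ snd p = e)).
      exists (a, b). simpl. auto. }
    destruct pr as [p1 p2]. simpl in Hp. destruct Hp as [Hp Hp1]. pose proof Hp as [Hp2 _].
    pose proof (Rmin_l (e - a) (e - p1)). pose proof (Rmin_r (e - a) (e - p1)).
    assert (0 < Rmin (e - a) (e - p1)) by (apply Rmin_glb_lt; lra).
    destruct (M4 S a b p1 p2 (e - Rmin (e - a) (e - p1) / 2) Hm Hp) as [-> ->]; try lra. auto.
  - right; right.
    assert (Hca' : c < a) by lra. assert (Hbe' : b < e) by lra.
    pose proof (M6 c e f df k D a b H Hm Hca' Hbe') as H6.
    assert (Hlen : 2 * h <= b - a).
    { unfold h. apply Rmult_le_reg_l with D; [lra|]. field_simplify; lra. }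
    destruct (up_nat ((a - c) / h)) as [n [Hn1 Hn2]].
    { apply Rdiv_le_0_compat; lra. }
    assert (Hg1 : a < c + INR n * h).
    { apply Rmult_lt_compat_r with (r := h) in Hn1; auto.
      unfold Rdiv in Hn1. rewrite Rmult_assoc, Rinv_l in Hn1 by lra. lra. }
    assert (Hg2 : c + INR n * h <= a + h).
    { apply Rmult_le_compat_r with (r := h) in Hn2; [|lra].
      unfold Rdiv in Hn2. rewrite Rmult_plus_distr_r, Rmult_assoc, Rinv_l in Hn2 by lra. lra. }
    assert (HNe : e - c < INR N * h).
    { apply Rmult_lt_compat_r with (r := h) in HN1; auto.
      unfold Rdiv in HN1. rewrite Rmult_assoc, Rinv_l in HN1 by lra. lra. }
    assert (HnN : (n < N)%nat).
    { apply INR_lt. apply Rmult_lt_reg_r with h; lra. }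
    apply in_map_iff. exists n. split; [|apply in_seq; lia].
    set (g := c + INR n * h) in *.
    assert (Hp : max_open_interval S (fst (fsel g)) (snd (fsel g)) /\ fst (fsel g) < g < snd (fsel g)).
    { apply (epsilon_spec (inhabits (0,0)) (fun p : R * R => max_open_interval S (fst p) (snd p) /\ fst p < g < snd p)).
      exists (a, b). simpl. split; auto; lra. }
    destruct (fsel g) as [p1 p2]. simpl in Hp. destruct Hp as [Hp Hp1].
    destruct (M4 S a b p1 p2 g Hm Hp) as [-> ->]; try lra. auto.
Qed.
Lemma ex_der_Phi (Omega : Type) (d : Omega -> Omega -> R) ja jb pi x y t :
  smooth_in_lambda pi ja jb -> inJ ja jb t -> ex_derive (fun l => Phi d pi l x y) t.
Proof.
  intros Hs Ht. pose proof (Hs x t Ht 1%nat) as H1. pose proof (Hs y t Ht 1%nat) as H2.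
  simpl in H1, H2. unfold Phi. apply ex_derive_mult.
  apply (ex_derive_minus (fun l => pi l x) (fun l => pi l y)); auto. apply ex_derive_const.
Qed.
Theorem lemmaA1 (Omega : Type) (d : Omega -> Omega -> R) (ja jb : Rbar)
  (pi : R -> Omega -> R) (tau : R)
  (Hd : is_metric d) (Hcpt : metric_compact d) (HJ : Rbar_lt ja jb)
  (Hcont : cont_in_x d pi ja jb) (Hsmooth : smooth_in_lambda pi ja jb)
  (Htau : 0 <= tau < 1)
  (Htrans : transversal d pi ja jb tau) (Hreg : regular d pi ja jb tau)
  (c e : R) (Hce : c < e) (HIJ : forall l, c <= l <= e -> inJ ja jb l)
  (delta : R) (Hdelta : transversal_const d pi tau (fun l => c <= l <= e) delta) :
  exists C eps : R, 0 < C /\ 0 < eps /\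
  forall x y : Omega, x <> y ->
  let r := d x y in
  let S := fun l => c < l < e /\ Rabs (Phi d pi l x y) < delta * Rpower r tau in
  (* S is the union of its maximal open intervals, of which there are finitely many *)
  (forall l, S l -> exists a b, max_open_interval S a b /\ a < l < b) /\
  (exists L : list (R * R), forall a b, max_open_interval S a b -> In (a, b) L) /\
  forall a b, max_open_interval S a b ->
    (* (i) *)
    (b - a <= 2 /\ (a <> c -> b <> e -> C * Rpower r (2 * tau) <= b - a)) /\
    (* (ii) *)
    (exists lj, a <= lj <= b /\
       (forall l, a <= l <= b ->
          Rabs (Phi d pi l x y) >= Rabs (Phi d pi lj x y) /\
          Rabs (Phi d pi l x y) >= delta * Rpower r tau * Rabs (l - lj)) /\
       (* (b) *)
       (Rabs (Phi d pi lj x y) >= delta * Rpower r tau / 2 ->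
          forall l, Rabs (l - lj) < eps * Rpower r (2 * tau) -> c <= l <= e ->
            Rabs (Phi d pi l x y) >= delta * Rpower r tau / 2)) /\
    (* (a) *)
    (forall l, a < l < b -> Rabs (Phi d pi l x y) <= delta * Rpower r tau / 2 ->
       forall m, Rabs (m - l) < eps * Rpower r (2 * tau) -> c < m < e -> a < m < b).
Proof.
  destruct Hdelta as [Hdp Htr].
  assert (HK : cpt_sub ja jb (fun l => c <= l <= e)).
  { split. apply Rtopology.compact_P3. exact HIJ. }
  destruct (Hreg _ HK 1%nat) as [C1 HC1].
  set (C1' := Rmax C1 1). assert (HC1' : 0 < C1') by (unfold C1'; pose proof (Rmax_r C1 1); lra).
  exists (delta / C1'), (delta / (2 * C1')).
  split. apply Rdiv_lt_0_compat; lra. split. apply Rdiv_lt_0_compat; lra.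
  intros x y Hxy r S.
  destruct Hd as (Hd0 & Hd1 & _).
  assert (Hr : 0 < r). { unfold r. destruct (Hd0 x y) as [|E]; auto. symmetry in E. apply Hd1 in E. tauto. }
  set (rho := Rpower r tau). assert (Hrho : 0 < rho) by (unfold rho, Rpower; apply exp_pos).
  assert (E2 : Rpower r (2 * tau) = rho * rho).
  { unfold rho. rewrite <- Rpower_plus. f_equal. ring. }
  set (f := fun l => Phi d pi l x y).
  set (k := delta * rho). set (D := C1' * / rho).
  assert (HH : Hyp c e f (Derive f) k D).
  { split; [lra|]. split; [unfold k; apply Rmult_lt_0_compat; lra|].
    split; [unfold D; apply Rmult_lt_0_compat; [lra| apply Rinv_0_lt_compat; lra]|].
    assert (Hex : forall t, c <= t <= e -> ex_derive f t).
    { intros t Ht. apply (ex_der_Phi Omega d ja jb pi x y t Hsmooth (HIJ t Ht)). }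
    split. { intros t Ht. apply (proj2 (continuity_pt_filterlim f t)). exact (ex_derive_continuous f t (Hex t Ht)). }
    split. { intros t Ht. apply Derive_correct. auto. }
    split.
    - intros t Ht. pose proof (HC1 t x y Ht Hxy) as Hb. simpl in Hb.
      replace (Ropp 1 * tau) with (- tau) in Hb by ring. rewrite Rpower_Ropp in Hb.
      unfold D. fold r rho in Hb. fold f in Hb.
      apply Rle_trans with (1 := Hb). apply Rmult_le_compat_r.
      left; apply Rinv_0_lt_compat; lra. apply Rmax_l.
    - intros t Ht Hft. apply (Htr t x y Ht Hxy Hft). }
  fold f. rewrite E2. fold rho. fold k.
  change S with (SS c e f k).
  split. { intros l Hl. exact (E1 c e f (Derive f) k D HH l Hl). }
  split. { exact (F c e f (Derive f) k D HH). }
  assert (Heps : D * (delta / (2 * C1') * (rho * rho)) <= k / 2).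
  { unfold D, k. right. field. lra. }
  intros a b Hm. split; [split|split].
  - exact (M5 c e f (Derive f) k D a b HH Hm).
  - intros Hac Hbe. pose proof (M1 _ _ _ _ _ _ Hm) as [Hca Hbe'].
    pose proof (M6 c e f (Derive f) k D a b HH Hm ltac:(lra) ltac:(lra)) as H6.
    unfold D, k in H6.
    assert (2 * delta * rho * rho <= C1' * (b - a)).
    { apply Rmult_le_compat_r with (r := rho) in H6; [|lra].
      replace (C1' * / rho * (b - a) * rho) with (C1' * (b - a)) in H6 by (field; lra). lra. }
    apply Rmult_le_reg_l with C1'; [lra|].
    replace (C1' * (delta / C1' * (rho * rho))) with (delta * rho * rho) by (field; lra).
    assert (0 <= delta * rho * rho) by (apply Rmult_le_pos; [apply Rmult_le_pos|]; lra). lra.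
  - exact (M7 c e f (Derive f) k D a b _ HH Hm Heps).
  - exact (M8 c e f (Derive f) k D a b _ HH Hm Heps).
Qed.
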